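(* If an upper-embeddable cubic graph $G$ contains a loop, then $G$ is tightly two-face-embeddable.
   Context: Graphs are finite; loops and multiple edges are allowed; a cubic graph is $3$-regular. For a connected graph $H$, $\beta(H)=|E(H)|-|V(H)|+1$. A connected graph is upper-embeddable if it has a cellular embedding (all faces open discs) into a closed orientable surface with at most two faces; a cubic upper-embeddable graph with $\beta$ odd is called two-face-embeddable (it has such an embedding with exactly two faces). In an upper-embeddable cubic graph $G$, a pair $\{x,y\}$ of distinct vertices is removable if $x$ and $y$ are joined by exactly one edge, this edge $xy$ is not a bridge, and $G-\{x,y\}$ is (connected and) upper-embeddable. $G$ is amply upper-embeddable if it is upper-embeddable and has a removable pair; it is tightly upper-embeddable if it is upper-embeddable but not amply upper-embeddable. A two-face-embeddable cubic graph is tightly two-face-embeddable if it is not amply upper-embeddable. *)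

(* Defs.v *)
(* Graphs with loops and multiple edges as dart structures;
   orientable cellular embeddings as rotation systems (Heffter-Edmonds). *)
From mathcomp Require Import all_boot fingroup perm.
Set Implicit Arguments. Unset Strict Implicit. Unset Printing Implicit Defensive.

(* A finite multigraph (loops and multiple edges allowed): every edge is a pair
   of darts {d, dinv d}; dv d is the vertex at which dart d is attached. *)
Record mgraph := MGraph {
  vtx : finType;
  dart : finType;
  dv : dart -> vtx;
  dinv : dart -> dart;
  dinvK : involutive dinv;
  dinv_neq : forall d, dinv d != d }.

Section Defs.
Variable G : mgraph.

Definition darts_in (S : {set vtx G}) : {set dart G} :=
  [set d | (dv d \in S) && (dv (dinv d) \in S)].

Definition adjE (Ds : {set dart G}) : rel (vtx G) :=
  fun x y => [exists d in Ds, (dv d == x) && (dv (dinv d) == y)].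

Definition connectedS (S : {set vtx G}) : bool :=
  (S != set0) &&
  [forall x in S, [forall y in S, connect (adjE (darts_in S)) x y]].

Definition ncomp (Ds : {set dart G}) : nat := n_comp (adjE Ds) predT.

Definition is_bridge (d : dart G) : bool :=
  (ncomp [set: dart G] < ncomp ([set: dart G] :\ d :\ dinv d))%N.

Definition rotation (S : {set vtx G}) (s : {perm dart G}) : Prop :=
  (forall d, d \in darts_in S -> (s d \in darts_in S) /\ dv (s d) = dv d) /\
  (forall d d', d \in darts_in S -> d' \in darts_in S -> dv d = dv d' ->
     fconnect s d d').

Definition faces (S : {set vtx G}) (s : {perm dart G}) : nat :=
  fcard (fun d => s (dinv d)) (mem (darts_in S)).

Definition upper_embeddable (S : {set vtx G}) : Prop :=
  connectedS S /\ exists s : {perm dart G}, rotation S s /\ (faces S s <= 2)%N.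

Definition cubic : Prop := forall v : vtx G, #|[set d | dv d == v]| = 3.

(* Betti number |E| - |V| + 1 of the induced subgraph on S (exact when connected) *)
Definition beta (S : {set vtx G}) : nat := (#|darts_in S| %/ 2).+1 - #|S|.

Definition has_loop : Prop := exists d : dart G, dv (dinv d) = dv d.

Definition two_face_embeddable : Prop :=
  cubic /\ upper_embeddable setT /\ odd (beta setT).

Definition removable (x y : vtx G) : Prop :=
  [/\ x != y,
      #|[set d | (dv d == x) && (dv (dinv d) == y)]| = 1,
      (forall d, dv d = x -> dv (dinv d) = y -> ~~ is_bridge d) &
      upper_embeddable (~: [set x; y])].

Definition amply_upper_embeddable : Prop :=
  upper_embeddable setT /\ exists x y, removable x y.

Definition tightly_two_face_embeddable : Prop :=
  two_face_embeddable /\ ~ amply_upper_embeddable.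

End Defs.

(* Main.v *)
Require Import Defs.
From mathcomp Require Import all_boot fingroup perm.
From mathcomp Require Import zify.
Set Implicit Arguments. Unset Strict Implicit. Unset Printing Implicit Defensive.

Section Generic.
Variable T : finType.

Lemma fconnect_iterP (f : T -> T) x y :
  reflect (exists n, iter n f x = y) (fconnect f x y).
Proof.
apply: (iffP idP) => [/iter_findex H|[n <-]]; last exact: fconnect_iter.
by exists (findex f x y).
Qed.

Lemma ncomp_img (K : finType) (e : rel T) (A : {set T}) (g : T -> K) :
  connect_sym e -> closed e A ->
  {in A &, forall x y, connect e x y = (g x == g y)} ->
  n_comp e A = #|g @: A|.
Proof.
move=> sym clA Hg.
have -> : g @: A = g @: [set x in A | roots e x].
  apply/setP=> k; apply/imsetP/imsetP => [[x xA ->]|[x]]; last first.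
    by rewrite inE => /andP[xA _] ->; exists x.
  have rA : root e x \in A by rewrite -(closed_connect clA (connect_root e x)).
  exists (root e x); first by rewrite inE roots_root // rA.
  by apply/eqP; rewrite -Hg //; exact: connect_root.
rewrite card_in_imset.
  by apply: eq_card => x; rewrite !inE andbC.
move=> x y; rewrite !inE => /andP[xA rx] /andP[yA ry] /eqP.
rewrite -Hg // => /(rootP sym).
by rewrite (eqP rx) (eqP ry).
Qed.


Lemma porbits_fcard (p : {perm T}) : #|porbits p| = fcard p [set: T].
Proof.
rewrite (@ncomp_img _ _ _ (porbit p)).
- rewrite /porbits; apply: eq_card => X; apply/imsetP/imsetP => -[x _ ->]; by exists x.
- exact: fconnect_sym (@perm_inj _ p).
- by move=> x y _; rewrite !inE.
move=> x y _ _; rewrite eq_porbit_mem porbit_sym.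
apply/fconnect_iterP/porbitP => -[n H]; exists n.
  by rewrite permX H.
by rewrite H permX.
Qed.
End Generic.
Section Generic2.
Variable T : finType.

Definition restr (f : T -> T) (D : {set T}) x := if x \in D then f x else x.

Lemma restr_inj (f : T -> T) (D : {set T}) : injective f -> (forall x, x \in D -> f x \in D) ->
  injective (restr f D).
Proof.
move=> fi fD x y; rewrite /restr.
case: (boolP (x \in D)) => xD; case: (boolP (y \in D)) => yD.
- exact: fi.
- by move=> E; move: (fD x xD); rewrite E (negPf yD).
- by move=> E; move: (fD y yD); rewrite -E (negPf xD).
- by [].
Qed.

Lemma porbits_restr (p : {perm T}) (D : {set T}) :
  (forall x, x \notin D -> p x = x) -> (forall x, x \in D -> p x \in D) ->
  #|porbits p| = fcard p D + #|~: D|.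
Proof.
move=> fix_out inD.
have clD : forall x, (p x \in D) = (x \in D).
  move=> x; case: (boolP (x \in D)) => xD; first exact: inD.
  by rewrite fix_out // (negPf xD).
rewrite porbits_fcard (@eq_n_comp_r _ _ _ predT) => [|x]; last by rewrite inE.
rewrite (n_compC (mem D)); congr (_ + _).
rewrite (@eq_n_comp_r _ _ _ (~: D)) => [|x]; last by rewrite !inE.
rewrite (@ncomp_img _ _ _ _ id); first by rewrite imset_id.
- exact: fconnect_sym (@perm_inj _ p).
- by move=> x y /eqP <-; rewrite !inE clD.
move=> x y; rewrite inE => xD _.
apply/fconnect_iterP/eqP => [[n <-]|<-]; last by exists 0.
by elim: n => //= n IH; rewrite -IH fix_out.
Qed.

Lemma closed_restr (p : T -> T) (D : {set T}) :
  (forall x, x \notin D -> p x = x) -> (forall x, x \in D -> p x \in D) ->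
  fclosed p D.
Proof.
move=> fix_out inD x y; rewrite /=; move/eqP => <-.
case: (boolP (x \in D)) => xD; first by rewrite inD.
by rewrite fix_out // (negPf xD).
Qed.

Lemma fconnect_agree (f g : T -> T) (D : {set T}) x y :
  {in D, f =1 g} -> (forall z, z \in D -> f z \in D) -> x \in D ->
  fconnect f x y = fconnect g x y.
Proof.
move=> fg fD xD.
have H n : iter n f x = iter n g x /\ iter n f x \in D.
  elim: n => [|n [IH1 IH2]] //=; rewrite -IH1; split; [exact: fg | exact: fD].
apply/fconnect_iterP/fconnect_iterP => -[n <-]; exists n; by case: (H n).
Qed.

Lemma fcard_agree (f g : T -> T) (D : {set T}) :
  {in D, f =1 g} -> (forall z, z \in D -> f z \in D) -> fcard f D = fcard g D.
Proof.
move=> fg fD; apply: eq_card => x; rewrite !inE.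
case: (boolP (x \in D)) => xD; rewrite ?andbF ?andbT //.
by rewrite /roots /root (eq_pick (fun y => fconnect_agree y fg fD xD)).
Qed.
End Generic2.
Section Graph.
Variable G : mgraph.
Implicit Types (S : {set vtx G}) (s : {perm dart G}).

Lemma dinv_inj : injective (@dinv G). Proof. exact: inv_inj (@dinvK G). Qed.

Lemma dinv_in S d : (dinv d \in darts_in S) = (d \in darts_in S).
Proof. by rewrite !inE dinvK andbC. Qed.

Lemma rot_in S s : rotation S s -> forall d, d \in darts_in S -> s d \in darts_in S.
Proof. by case=> H _ d /H []. Qed.

Lemma faces_count S s : rotation S s ->
  exists phi : {perm dart G},
   [/\ faces S s = fcard phi (darts_in S),
       (forall x, x \in darts_in S -> phi x = s (dinv x)),
       (forall x, x \notin darts_in S -> phi x = x) &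
       odd (faces S s) = odd (#|darts_in S| %/ 2 + #|@dv G @: darts_in S|)].
Proof.
move=> rot; set D := darts_in S.
have sD := rot_in rot.
have iD : forall d, d \in D -> dinv d \in D by move=> d; rewrite dinv_in.
pose sig := perm (restr_inj (@perm_inj _ s) sD).
pose iot := perm (restr_inj (@dinv_inj) iD).
have sigE x : sig x = restr s D x by rewrite permE.
have iotE x : iot x = restr (@dinv G) D x by rewrite permE.
pose phi := (iot * sig)%g.
have phiE x : x \in D -> phi x = s (dinv x).
  by move=> xD; rewrite permM iotE sigE /restr xD iD.
have phiO x : x \notin D -> phi x = x.
  by move=> xD; rewrite permM iotE sigE /restr (negPf xD) (negPf xD).
have phiD x : x \in D -> phi x \in D by move=> xD; rewrite phiE // sD ?iD.
have sigO x : x \notin D -> sig x = x by move=> xD; rewrite sigE /restr (negPf xD).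
have sigD x : x \in D -> sig x \in D by move=> xD; rewrite sigE /restr xD sD.
have iotO x : x \notin D -> iot x = x by move=> xD; rewrite iotE /restr (negPf xD).
have iotD x : x \in D -> iot x \in D by move=> xD; rewrite iotE /restr xD iD.
have hphi : faces S s = fcard phi D.
  by rewrite /faces; apply: esym; apply: fcard_agree.
exists phi; split => //.
have hsig : fcard sig D = #|@dv G @: D|.
  apply: ncomp_img.
  - exact: fconnect_sym (@perm_inj _ sig).
  - exact: closed_restr.
  move=> x y xD yD.
  rewrite (@fconnect_agree _ _ s D) //; last by move=> z zD; rewrite sigE /restr zD.
  apply/idP/eqP => [/fconnect_iterP [n <-]|].
    have H : forall n, iter n s x \in D /\ dv (iter n s x) = dv x.
      elim=> [|m [IH1 IH2]] //=; have [rot1 _] := rot.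
      by case: (rot1 _ IH1) => -> ->.
    by case: (H n).
  by have [_ rot2] := rot; apply: rot2.
have hiot : fcard iot D * 2 = #|D|.
  apply: (fcard_order_set (@perm_inj _ iot)); last first.
    exact: closed_restr.
  apply/subsetP => x xD; rewrite inE /fingraph.order.
  have -> : #|fconnect iot x| = #|[set x; dinv x]|.
    apply: eq_card => y; rewrite !inE.
    apply/fconnect_iterP/orP => [[n <-]|[/eqP ->|/eqP ->]]; last 2 first.
    - by exists 0.
    - by exists 1; rewrite /= iotE /restr xD.
    elim: n => [|n IH] /=; first by left.
    case: IH => /eqP ->; first by right; rewrite iotE /restr xD.
    by left; rewrite iotE /restr iD // dinvK.
  by rewrite cards2 (eq_sym x) dinv_neq.
have := odd_permM iot sig; rewrite /odd_perm.
rewrite (porbits_restr phiO phiD) (porbits_restr iotO iotD) (porbits_restr sigO sigD).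
rewrite -hphi hsig -hiot mulnK //.
have := cardsC D; rewrite -hiot.
move: (fcard iot D) (faces S s) #|@dv G @: D| #|~: D| #|dart G| => a b c d N <-.
rewrite !oddD !oddM /=.
by case: (odd a); case: (odd b); case: (odd c); case: (odd d).
Qed.
End Graph.
Section Graph2.
Variable G : mgraph.
Implicit Types (S : {set vtx G}) (s : {perm dart G}).

Lemma three_darts (x : vtx G) (d1 d2 : dart G) : cubic G -> dv d1 = x -> dv d2 = x ->
  d1 != d2 -> exists e : dart G, [/\ dv e = x, e != d1, e != d2 &
     forall d, dv d = x -> [|| d == d1, d == d2 | d == e]].
Proof.
move=> cub h1 h2 n12.
pose X := [set d : dart G | dv d == x].
have : #|X :\ d2 :\ d1| = 1.
  have := cub x; rewrite -/X (cardsD1 d1) (cardsD1 d2 (X :\ d1)) !inE h1 h2 eqxx (eq_sym d2) n12 /=.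
  by rewrite setDDl setUC -setDDl => [[]].
move=> H1; have [e He] : exists e, X :\ d2 :\ d1 = [set e] by apply/cards1P; rewrite H1.
have eX : e \in X :\ d2 :\ d1 by rewrite He set11.
move: (eX); rewrite !inE => /and3P[ne1 ne2 /eqP ex].
exists e; split => // d dx.
case: (eqVneq d d1) => //= nd1; case: (eqVneq d d2) => //= nd2.
have : d \in X :\ d2 :\ d1 by rewrite !inE nd1 nd2 dx eqxx.
by rewrite He inE.
Qed.
End Graph2.
Section Graph3.
Variable G : mgraph.
Implicit Types (S : {set vtx G}) (s : {perm dart G}).

Lemma iterfix (T : Type) (f : T -> T) (y : T) n : f y = y -> iter n f y = y.
Proof. by move=> fy; elim: n => //= n ->. Qed.

Lemma loop_faces S s a : cubic G -> rotation S s -> a \in darts_in S ->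
  dv (dinv a) = dv a -> 1 < faces S s.
Proof.
move=> cub rot aD loopa.
have [rot1 rot2] := rot.
have [phi [-> phiE phiO _]] := faces_count rot.
set D := darts_in S in aD phiE phiO rot1 rot2 *.
have a'D : dinv a \in D by rewrite dinv_in.
have naa' : a != dinv a by rewrite eq_sym dinv_neq.
have [e [ex ea ea' He]] := three_darts cub (erefl (dv a)) loopa naa'.
have sx d : d \in D -> dv d = dv a -> [|| s d == a, s d == dinv a | s d == e].
  by move=> dD dx; apply: He; case: (rot1 d dD) => _ ->.
have [b [bD phib]] : exists b, b \in D /\ phi b = b.
  have fc := rot2 a (dinv a) aD a'D (esym loopa).
  case/or3P: (sx a aD erefl) => /eqP sa.
  - by case/fconnect_iterP: fc => n; rewrite iterfix // => /eqP; rewrite (negPf naa').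
  - by exists (dinv a); rewrite phiE // dinvK.
  have eD : e \in D by rewrite -sa; case: (rot1 a aD).
  case/or3P: (sx e eD ex) => /eqP se.
  - case/fconnect_iterP: fc => n.
    have : iter n s a \in [set a; e].
      elim: n => [|n IH] /=; first by rewrite !inE eqxx.
      by case/set2P: IH => ->; rewrite ?sa ?se !inE eqxx ?orbT.
    move=> H E; move: H; rewrite E !inE (eq_sym (dinv a) a) (negPf naa') /=.
    by rewrite eq_sym (negPf ea').
  - case/or3P: (sx (dinv a) a'D loopa) => /eqP sa'.
    + by exists a; rewrite phiE.
    + by move: ea'; rewrite -(perm_inj (etrans se (esym sa'))) eqxx.
    + by move: naa'; rewrite -(perm_inj (etrans sa (esym sa'))) eqxx.
  - by move: ea; rewrite -(perm_inj (etrans sa (esym se))) eqxx.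
have phiD x : x \in D -> phi x \in D.
  by move=> xD; rewrite phiE //; case: (rot1 (dinv x)) => //; rewrite dinv_in.
apply/(fcard_gt1P (@perm_inj _ phi) (closed_restr phiO phiD)).
exists b => //; exists (dinv b); first by rewrite dinv_in.
apply/fconnect_iterP => -[n]; rewrite iterfix // => /eqP.
by rewrite eq_sym (negPf (dinv_neq b)).
Qed.
End Graph3.
Lemma ncomp_lt (T : finType) (e e' : rel T) x y : connect_sym e -> connect_sym e' ->
  subrel e' e -> connect e x y -> ~~ connect e' x y -> n_comp e predT < n_comp e' predT.
Proof.
move=> se se' sub cxy ncxy.
have -> : n_comp e predT = #|[set z | roots e z]| by apply: eq_card => z; rewrite !inE andbT.
have -> : n_comp e' predT = #|[set z | roots e' z]| by apply: eq_card => z; rewrite !inE andbT.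
have sub' : subrel (connect e') (connect e).
  by apply: connect_sub => u v /sub; apply: connect1.
have rr z : root e (root e' z) = root e z.
  apply/esym/(rootP se); apply: sub'; exact: connect_root.
apply: (@leq_ltn_trans #|root e @: [set z | roots e' z]|).
  apply: subset_leq_card; apply/subsetP => z; rewrite inE => /eqP rz.
  apply/imsetP; exists (root e' z); first by rewrite inE roots_root.
  by rewrite rr rz.
rewrite ltn_neqAle leq_imset_card andbT; apply/negP => /imset_injP inj.
move: ncxy; rewrite -(root_connect se') => /eqP; apply.
apply: inj; rewrite ?inE ?roots_root // !rr; exact/(rootP se).
Qed.

Section Graph4.
Variable G : mgraph.

Lemma adjE_sym (Ds : {set dart G}) : (forall d, (dinv d \in Ds) = (d \in Ds)) ->
  symmetric (adjE Ds).
Proof.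
move=> H x y; apply/existsP/existsP => -[d /andP[dD /andP[/eqP dx /eqP dy]]];
  by exists (dinv d); rewrite H dD dinvK dx dy !eqxx.
Qed.

Lemma is_bridge_inv (d : dart G) : is_bridge (dinv d) = is_bridge d.
Proof. by rewrite /is_bridge dinvK setDDl setUC -setDDl. Qed.

Lemma loop_bridge (d b : dart G) : cubic G -> dv b = dv d -> dv (dinv b) = dv d ->
  dv (dinv d) != dv d -> is_bridge d.
Proof.
move=> cub bx b'x nyx.
have nbb : b != dinv b by rewrite eq_sym dinv_neq.
have [e0 [e0x e0b e0b' He]] := three_darts cub bx b'x nbb.
have de0 : d == e0.
  case/or3P: (He d erefl) => // /eqP E.
  - by move: nyx; rewrite E b'x bx eqxx.
  - by move: nyx; rewrite E dinvK bx b'x eqxx.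
have atx dd : dv dd = dv d -> [|| dd == b, dd == dinv b | dd == d].
  move=> ddx; case/or3P: (He dd ddx) => /eqP ->; rewrite ?eqxx ?orbT //.
  by rewrite (eqP de0) eqxx !orbT.
set Ds' := [set: dart G] :\ d :\ dinv d.
have Hs : forall dd, (dinv dd \in Ds') = (dd \in Ds').
  move=> dd; rewrite !inE (inj_eq (@dinv_inj G)) (can2_eq (@dinvK G) (@dinvK G)).
  by case: (dd == d); case: (dd == dinv d).
have Hs0 : forall dd, (dinv dd \in [set: dart G]) = (dd \in [set: dart G]) by move=> dd; rewrite !inE.
rewrite /is_bridge /ncomp.
apply: (@ncomp_lt _ _ _ (dv d) (dv (dinv d))).
- exact: (sym_connect_sym (adjE_sym Hs0)).
- exact: (sym_connect_sym (adjE_sym Hs)).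
- move=> u v /existsP [dd /andP[_ H]]; apply/existsP; exists dd; by rewrite inE.
- apply: connect1; apply/existsP; exists d; by rewrite inE !eqxx.
apply/negP => /(closed_connect (a := pred1 (dv d))) H.
have : (dv d == dv d) = (dv (dinv d) == dv d).
  apply: H; apply: intro_closed; first exact: (sym_connect_sym (adjE_sym Hs)).
  move=> u v /existsP [dd /andP[ddD /andP[/eqP ddu /eqP ddv]]] /eqP ux.
  rewrite /= -ddv.
  move: ddD; rewrite !inE => /andP[_ /andP[nd _]].
  case/or3P: (atx dd (etrans ddu ux)) => /eqP E.
  - by rewrite E b'x.
  - by rewrite E dinvK bx.
  - by rewrite E eqxx in nd.
by rewrite eqxx (negPf nyx).
Qed.
End Graph4.
Section Main.
Variable G : mgraph.

Lemma card_darts : cubic G -> #|dart G| = 3 * #|vtx G|.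
Proof.
move=> cub.
rewrite -sum1_card (partition_big (@dv G) predT) //=.
rewrite (eq_bigr (fun _ => 3)) => [|v _].
  by rewrite big_const iter_addn_0 mulnC cardT.
by rewrite -(cub v) sum1dep_card; apply: eq_card => d; rewrite !inE.
Qed.
End Main.
Lemma arith1 n : odd (3 * n %/ 2 + n) = false -> odd ((3 * n %/ 2).+1 - n).
Proof.
move=> h; have := modn2 (3 * n %/ 2 + n); rewrite h /= => h'.
have := modn2 ((3 * n %/ 2).+1 - n); case: odd => //= ?; lia.
Qed.

Lemma arith2 n D k : D + 10 = 3 * n -> k + 2 = n -> odd (3 * n %/ 2 + n) = false ->
  odd (D %/ 2 + k) = false -> False.
Proof.
move=> h1 h2 h3 h4.
have := modn2 (3 * n %/ 2 + n); rewrite h3 /= => h'.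
have := modn2 (D %/ 2 + k); rewrite h4 /= => h''.
lia.
Qed.

Theorem lemma3 (G : mgraph) :
  cubic G -> upper_embeddable [set: vtx G] -> has_loop G ->
  tightly_two_face_embeddable G.
Proof.
move=> cub [conG [s [rot f2]]] [a loopa].
have DT : darts_in [set: vtx G] = [set: dart G] by apply/setP => d; rewrite !inE.
have dvT : (@dv G) @: [set: dart G] = [set: vtx G].
  apply/setP => v; rewrite inE; apply/imsetP.
  have : 0 < #|[set d | dv d == v]| by rewrite cub.
  by case/card_gt0P => d; rewrite inE => /eqP <-; exists d.
have [_ [_ _ _ par]] := faces_count rot.
have F2 : faces [set: vtx G] s = 2.
  apply/eqP; rewrite eqn_leq f2 /=; apply: (loop_faces cub rot _ loopa).
  by rewrite DT inE.
rewrite F2 DT dvT !cardsT /= (card_darts cub) in par.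
have betaodd : odd (beta [set: vtx G]).
  rewrite /beta DT !cardsT (card_darts cub).
  exact: arith1.
split; first by split => //; split => //; split => //; exists s.
case=> _ [x [y [nxy c1 nb ue]]].
have [d0 Hd0] : exists d0, [set d | (dv d == x) && (dv (dinv d) == y)] = [set d0].
  by apply/cards1P; rewrite c1.
have [d0x d0y] : dv d0 = x /\ dv (dinv d0) = y.
  have : d0 \in [set d | (dv d == x) && (dv (dinv d) == y)] by rewrite Hd0 set11.
  by rewrite inE => /andP[/eqP -> /eqP ->].
have xy d : dv d = x -> dv (dinv d) = y -> d = d0.
  by move=> dx dy; apply/set1P; rewrite -Hd0 inE dx dy !eqxx.
have nb0 := nb d0 d0x d0y.
have noloopx b : dv b = x -> dv (dinv b) = x -> False.
  move=> bx b'x; move/negP: nb0; apply; apply: (@loop_bridge _ _ b cub).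
  - by rewrite bx d0x.
  - by rewrite b'x d0x.
  - by rewrite d0x d0y eq_sym.
have noloopy b : dv b = y -> dv (dinv b) = y -> False.
  move=> hb b'y; move/negP: nb0; apply; rewrite -is_bridge_inv.
  apply: (@loop_bridge _ _ b cub).
  - by rewrite hb d0y.
  - by rewrite b'y d0y.
  - by rewrite dinvK d0x d0y.
set S := ~: [set x; y].
case: ue => conS [s' [rot' f2']].
have ax : dv a != x by apply/eqP => E; apply: (noloopx a) => //; rewrite loopa.
have ay : dv a != y by apply/eqP => E; apply: (noloopy a) => //; rewrite loopa.
have aS : a \in darts_in S by rewrite !inE loopa (negPf ax) (negPf ay).
have F2' : faces S s' = 2.
  by apply/eqP; rewrite eqn_leq f2' /=; apply: (loop_faces cub rot' aS loopa).
have [_ [_ _ _ par']] := faces_count rot'.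
have count2 : (@dv G) @: darts_in S = S.
  apply/setP => w; apply/imsetP/idP => [[d dS ->]|wS].
    by move: dS; rewrite inE => /andP[].
  case: (eqVneq w (dv a)) => [->|nwa]; first by exists a.
  move: conS => /andP[_ /forallP /(_ w) /implyP /(_ wS) /forallP /(_ (dv a)) /implyP].
  have aS' : dv a \in S by move: aS; rewrite inE => /andP[].
  move=> /(_ aS') /connectP [[|z p] pth E]; first by rewrite E eqxx in nwa.
  by case/andP: pth => /existsP [dd /andP[ddS /andP[/eqP ddw _]]] _; exists dd.
have count1 : #|darts_in S| + 10 = #|dart G|.
  pose A := [set d : dart G | (dv d == x) || (dv d == y)].
  have cA : #|A| = 6.
    have -> : A = [set d | dv d == x] :|: [set d | dv d == y] by apply/setP => d; rewrite !inE.
    have := cardsUI [set d : dart G | dv d == x] [set d | dv d == y].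
    have -> : [set d : dart G | dv d == x] :&: [set d | dv d == y] = set0.
      apply/setP => d; rewrite !inE; apply/negP => /andP[/eqP -> /eqP E].
      by rewrite E eqxx in nxy.
    by rewrite cards0 !cub addn0.
  have cB : #|(@dinv G) @^-1: A| = 6.
    by rewrite -(can2_imset_pre (mem A) (@dinvK G) (@dinvK G)) card_imset //; exact: (@dinv_inj G).
  have cI : A :&: ((@dinv G) @^-1: A) = [set d0; dinv d0].
    apply/setP => d; rewrite !inE.
    apply/idP/idP.
    - case/andP => /orP[/eqP dx|/eqP dy] /orP[/eqP d'x|/eqP d'y].
      + by case: (noloopx d dx d'x).
      + by rewrite (xy d dx d'y) eqxx.
      + have := xy (dinv d) d'x; rewrite dinvK => /(_ dy) <-.
        by rewrite dinvK eqxx orbT.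
      + by case: (noloopy d dy d'y).
    - by case/orP => /eqP ->; rewrite ?dinvK d0x d0y !eqxx ?orbT.
  have cZ : #|A :|: (@dinv G) @^-1: A| = 10.
    have := cardsUI A ((@dinv G) @^-1: A); rewrite cI cards2 cA cB.
    by rewrite (eq_sym d0) dinv_neq /= => H; lia.
  have -> : darts_in S = ~: (A :|: (@dinv G) @^-1: A).
    by apply/setP => d; rewrite !inE !negb_or.
  by rewrite -cZ addnC cardsC.
have cS : #|S| + 2 = #|vtx G|.
  by rewrite -(cardsC [set x; y]) cards2 nxy addnC.
rewrite F2' count2 in par'.
move: par'; rewrite /= -/S.
rewrite (card_darts cub) in count1.
move=> par''; apply: (arith2 count1 cS) (esym par'').
by rewrite par.
Qed.
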